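(* Let $n\ge1$ and let $x_1,\dots,x_n$ and $y_1,\dots,y_n$ be Boolean values. Define Boolean values $a_1,\dots,a_{n-1}$ and $d_1,\dots,d_n$ inductively by $a_1\Leftrightarrow(x_1\ge y_1)$; $a_{i+1}\Leftrightarrow(a_i\wedge x_{i+1}\ge y_{i+1})$ for $1\le i\le n-2$; $d_1\Leftrightarrow(y_1\ge x_1)$; $d_{i+1}\Leftrightarrow(d_i\wedge(\bar a_i\vee y_{i+1}\ge x_{i+1}))$ for $1\le i\le n-1$. Then $d_n$ holds if and only if $(x_1,\dots,x_n)\le_{\mathrm{lex}}(y_1,\dots,y_n)$.
   Context: Boolean values are $0$ (false) and $1$ (true), with $0<1$; $\bar a=1-a$. The lexicographic order on $\{0,1\}^n$: $(x_1,\dots,x_n)\le_{\mathrm{lex}}(y_1,\dots,y_n)$ iff the tuples are equal or, at the first index $i$ where they differ, $x_i<y_i$ (equivalently $\sum_{i=1}^n 2^{n-i}x_i\le\sum_{i=1}^n 2^{n-i}y_i$). *)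

(* Defs.v *)
From mathcomp Require Import all_boot.
Set Implicit Arguments. Unset Strict Implicit. Unset Printing Implicit Defensive.

(* Boolean tuples (x_1,...,x_n) are modelled as functions x : nat -> bool,
   of which only the values at indices 1..n are relevant.
   Booleans are compared via the coercion bool >-> nat (false=0 < true=1). *)

(* a_1 = (x_1 >= y_1); a_{i+1} = a_i /\ (x_{i+1} >= y_{i+1}).
   (a 0 is an unused dummy value.) *)
Fixpoint aseq (x y : nat -> bool) (i : nat) : bool :=
  match i with
  | 0 => true
  | 1 => (y 1 <= x 1)%N
  | i'.+1 => aseq x y i' && (y i'.+1 <= x i'.+1)%N
  end.

Fixpoint dseq (x y : nat -> bool) (i : nat) : bool :=
  match i with
  | 0 => true
  | 1 => (x 1 <= y 1)%N
  | i'.+1 => dseq x y i' && (~~ aseq x y i' || (x i'.+1 <= y i'.+1)%N)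
  end.

Definition lex_le (n : nat) (x y : nat -> bool) : Prop :=
  (forall i, 1 <= i <= n -> x i = y i) \/
  (exists i, [/\ 1 <= i <= n,
                 (forall j, 1 <= j < i -> x j = y j) &
                 (x i < y i)%N]).

(* Main.v *)
Require Import Defs.
From mathcomp Require Import all_boot.

Lemma aseqP (x y : nat -> bool) n : 1 <= n ->
  (aseq x y n <-> forall j, 1 <= j <= n -> (y j <= x j)%N).
Proof.
elim: n => [//|n IH] _.
case: n IH => [|n] IH.
  simpl; split; [move=> H j /andP[H1 H2]; have -> : j = 1 by apply/eqP; rewrite eqn_leq H1 H2 | move=> H; apply: H]; by [].
have IH' := IH isT.
change (aseq x y n.+2) with (aseq x y n.+1 && (y n.+2 <= x n.+2)%N).
split.
- move/andP=> [Ha Hb] j /andP[H1 H2].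
  rewrite leq_eqVlt in H2; case/orP: H2 => [/eqP->//|H2].
  by apply: (IH'.1 Ha); rewrite H1.
- move=> H; apply/andP; split; [idtac|by apply: H; rewrite /= leqnn].
  apply/IH' => j /andP[H1 H2]; apply: H; rewrite H1 /=; exact: leqW.
Qed.

Lemma lexS n x y : 1 <= n -> (lex_le n.+1 x y <->
  lex_le n x y /\ (~ (forall i, 1 <= i <= n -> x i = y i) \/ (x n.+1 <= y n.+1)%N)).
Proof.
move=> Hn; split.
- case=> [Heq|[i [/andP[Hi1 Hi2] Hlt Hxy]]].
  + split; first by left => i /andP[H1 H2]; apply: Heq; rewrite H1 /=; exact: leqW.
    by right; rewrite Heq //= leqnn.
  + rewrite leq_eqVlt in Hi2; case/orP: Hi2 => [/eqP Ei|Hi2].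
    * subst i; split; last by right; exact: ltnW.
      by left => j /andP[H1 H2]; apply: Hlt; rewrite H1 /= ltnS.
    * split; first by right; exists i; split => //; rewrite Hi1.
      left => Heq; move: Hxy; rewrite Heq ?ltnn // Hi1 //.
- case=> [[Heq|[i [/andP[Hi1 Hi2] Hlt Hxy]]] Hr].
  + case: Hr => [//|Hle].
    case E: (x n.+1 == y n.+1).
    * left => i /andP[H1 H2]; rewrite leq_eqVlt in H2; case/orP: H2 => [/eqP->|H2].
        exact/eqP.
      by apply: Heq; rewrite H1.
    * right; exists n.+1; split; [by rewrite /= leqnn | by move=> j /andP[H1 H2]; apply: Heq; rewrite H1 | ].
      move: E Hle; by case: (x n.+1); case: (y n.+1).
  + right; exists i; split => //; rewrite Hi1 /=; exact: leqW.
Qed.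

Theorem lemma11 (n : nat) (x y : nat -> bool) :
  1 <= n -> (dseq x y n <-> lex_le n x y).
Proof.
elim: n => [//|n IH] _.
case: n IH => [|n] IH.
  simpl; split.
  - move=> H; case E: (x 1 == y 1).
      left => i /andP[H1 H2]; have -> : i = 1 by apply/eqP; rewrite eqn_leq H1 H2.
      exact/eqP.
    right; exists 1; split => //; first by case.
    move: E H; by case: (x 1); case: (y 1).
  - case=> [H|[i [/andP[H1 H2] _ H]]]; first by rewrite H.
    have E : i = 1 by apply/eqP; rewrite eqn_leq H1 H2.
    by subst i; apply: ltnW.
have IH' := IH isT.
change (dseq x y n.+2) with (dseq x y n.+1 && (~~ aseq x y n.+1 || (x n.+2 <= y n.+2)%N)).
have LS := @lexS n.+1 x y isT.
have key : lex_le n.+1 x y -> (aseq x y n.+1 <-> forall i, 1 <= i <= n.+1 -> x i = y i).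
  move=> L; have AP := @aseqP x y n.+1 isT; split.
  - move/AP=> A; case: L => [//|[i [Hi Hlt Hxy]]].
    by have := A i Hi; move: Hxy; case: (x i); case: (y i).
  - by move=> Heq; apply/AP => j Hj; rewrite Heq.
split.
- move/andP=> [D R]; have L := proj1 IH' D; apply/LS; split => //.
  case/orP: R => [NA|R]; last by right.
  by left => Heq; move/negP: NA; apply; apply/(key L).
- move/LS=> [L R]; apply/andP; split; first exact/IH'.
  case: R => [NE|R]; last by rewrite R orbT.
  apply/orP; left; apply/negP => A; apply: NE; exact/(key L).
Qed.
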